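(* The projective Fraïssé limit $\mathbb G$ of the class $\mathcal G$ of finite connected graphs with confluent epimorphisms is an indecomposable topological graph.
   Context: A graph is a pair $A=(V(A),E(A))$ with $E(A)\subseteq V(A)^2$ reflexive and symmetric; a topological graph additionally has $V$ compact, second countable, zero-dimensional and $E$ closed. Epimorphisms are (continuous) edge-preserving maps surjective on vertices and edges. A vertex set $S$ is disconnected if it splits into two nonempty closed subsets with no edges between them; otherwise connected; components are maximal connected subsets. An epimorphism $f\colon A\to B$ is confluent if for every connected $Q\subseteq V(B)$ each component $C$ of $f^{-1}(Q)$ has $f(C)=Q$. $\mathbb G$ is the unique topological graph such that (1) every finite connected graph is a confluent epimorphic image of $\mathbb G$; (2) for finite connected graphs $A,B$ and confluent epimorphisms $f\colon\mathbb G\to A$, $g\colon B\to A$ there is a confluent epimorphism $h\colon\mathbb G\to B$ with $f=g\circ h$; (3) for each $\varepsilon>0$ some confluent epimorphism from $\mathbb G$ onto a finite connected graph has all point-preimages of diameter $<\varepsilon$. A connected topological graph $G$ is indecomposable if there are no closed connected subgraphs $A,B$ with $V(G)=V(A)\cup V(B)$, $V(A)\neq V(G)$ and $V(B)\neq V(G)$. *)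

(* Defs.v *)
From HB Require Import structures.
From mathcomp Require Import all_boot all_order all_algebra.
From mathcomp Require Import all_classical all_reals all_analysis.
Set Implicit Arguments. Unset Strict Implicit. Unset Printing Implicit Defensive.
Import Order.TTheory GRing.Theory Num.Theory.
Local Open Scope classical_set_scope.
Local Open Scope ring_scope.

(** A "graph" is a vertex type with an edge
    relation [E]; [cl] is the predicate "closed subset of the vertex space"
    (topological closedness for topological graphs, always true for finite
    graphs, which carry the discrete topology). *)

Definition gdisconnected {V : Type} (cl : set V -> Prop) (E : V -> V -> Prop)
  (S : set V) : Prop :=
  exists P Q : set V,
    [/\ P !=set0, Q !=set0, P `|` Q = S, P `&` Q = set0 &
        [/\ (exists P', cl P' /\ P = S `&` P'),
            (exists Q', cl Q' /\ Q = S `&` Q') &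
            (forall p q, P p -> Q q -> ~ E p q)]].

Definition gconnected {V : Type} (cl : set V -> Prop) (E : V -> V -> Prop)
  (S : set V) : Prop := ~ gdisconnected cl E S.

Definition gcomponent {V : Type} (cl : set V -> Prop) (E : V -> V -> Prop)
  (S C : set V) : Prop :=
  [/\ C `<=` S, gconnected cl E C &
      forall D, C `<=` D -> D `<=` S -> gconnected cl E D -> D = C].

Definition graph_epi {V W : Type} (EV : V -> V -> Prop) (EW : W -> W -> Prop)
  (f : V -> W) : Prop :=
  [/\ (forall x y, EV x y -> EW (f x) (f y)),
      (forall w, exists v, f v = w) &
      (forall a b, EW a b -> exists x y, [/\ EV x y, f x = a & f y = b])].

Definition gconfluent {V W : Type} (clV : set V -> Prop) (EV : V -> V -> Prop)
  (clW : set W -> Prop) (EW : W -> W -> Prop) (f : V -> W) : Prop :=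
  forall Q : set W, gconnected clW EW Q ->
    forall C : set V, gcomponent clV EV (f @^-1` Q) C -> f @` C = Q.

Definition fin_closed {T : finType} : set T -> Prop := fun _ => True.

Definition fin_connected_graph (T : finType) (e : rel T) : Prop :=
  [/\ (0 < #|T|)%N, reflexive e, symmetric e &
      gconnected (@fin_closed T) (fun x y => e x y) setT].

Definition topological_graph (V : topologicalType) (E : set (V * V)) : Prop :=
  [/\ compact [set: V], @second_countable V, zero_dimensional V,
      closed E & (forall x, E (x, x)) /\ (forall x y, E (x, y) -> E (y, x))].

Definition tedge {V : Type} (E : set (V * V)) : V -> V -> Prop :=
  fun x y => E (x, y).

Definition continuous_to_discrete (V : topologicalType) (T : finType)
  (f : V -> T) : Prop := forall A : set T, open (f @^-1` A).

Definition tconfluent_epi (V : topologicalType) (E : set (V * V))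
  (T : finType) (e : rel T) (f : V -> T) : Prop :=
  [/\ continuous_to_discrete f, graph_epi (tedge E) (fun a b => e a b) f &
      gconfluent closed (tedge E) (@fin_closed T) (fun a b => e a b) f].

Definition fconfluent_epi (B : finType) (eB : rel B) (A : finType) (eA : rel A)
  (g : B -> A) : Prop :=
  graph_epi (fun a b => eB a b) (fun a b => eA a b) g /\
  gconfluent (@fin_closed B) (fun a b => eB a b) (@fin_closed A)
             (fun a b => eA a b) g.

Definition compatible_metric (R : realType) (V : topologicalType)
  (d : V -> V -> R) : Prop :=
  [/\ (forall x y, d x y = 0 <-> x = y),
      (forall x y, d x y = d y x),
      (forall x y z, d x z <= d x y + d y z) &
      (forall A : set V, open A <->
         (forall x, A x -> exists2 r : R, 0 < r & forall y, d x y < r -> A y))].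

Definition diam_lt (R : realType) (V : Type) (d : V -> V -> R)
  (S : set V) (eps : R) : Prop :=
  exists2 r : R, r < eps & forall x y, S x -> S y -> d x y <= r.

(** The three properties characterizing the projective Fraisse limit G. *)
Definition is_projective_Fraisse_limit (R : realType) (V : topologicalType)
  (E : set (V * V)) (d : V -> V -> R) : Prop :=
  [/\ topological_graph E,
      (* (1) *)
      (forall (A : finType) (eA : rel A), fin_connected_graph eA ->
         exists f : V -> A, tconfluent_epi E eA f),
      (* (2) *)
      (forall (A : finType) (eA : rel A) (B : finType) (eB : rel B),
         fin_connected_graph eA -> fin_connected_graph eB ->
         forall (f : V -> A) (g : B -> A),
           tconfluent_epi E eA f -> fconfluent_epi eB eA g ->
           exists h : V -> B, tconfluent_epi E eB h /\ f = g \o h) &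
      (* (3) *)
      (forall eps : R, 0 < eps ->
         exists (A : finType) (eA : rel A) (f : V -> A),
           [/\ fin_connected_graph eA, tconfluent_epi E eA f &
               forall a : A, diam_lt d (f @^-1` [set a]) eps])].

Definition closed_subgraph (V : topologicalType) (E : set (V * V))
  (VA : set V) (EA : set (V * V)) : Prop :=
  [/\ closed VA, closed EA, EA `<=` E,
      (forall x y, EA (x, y) -> VA x /\ VA y) &
      (forall x, VA x -> EA (x, x)) /\ (forall x y, EA (x, y) -> EA (y, x))].

Definition indecomposable (V : topologicalType) (E : set (V * V)) : Prop :=
  gconnected closed (tedge E) setT /\
  ~ (exists (VA : set V) (EA : set (V * V)) (VB : set V) (EB : set (V * V)),
       [/\ closed_subgraph E VA EA, gconnected closed (tedge EA) VA,
           closed_subgraph E VB EB, gconnected closed (tedge EB) VB &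
           [/\ VA `|` VB = setT, VA != setT & VB != setT]]).

(* Main.v *)
Require Import Defs.
From HB Require Import structures.
From mathcomp Require Import all_boot all_order all_algebra.
From mathcomp Require Import all_classical all_reals all_analysis.
Set Implicit Arguments. Unset Strict Implicit. Unset Printing Implicit Defensive.
Import Order.TTheory GRing.Theory Num.Theory.
Local Open Scope classical_set_scope.

Lemma fin_side (T : finType) (e : T -> T -> Prop) (D P R : set T) :
  gconnected (@fin_closed T) e D -> D `<=` P `|` R -> P `&` R = set0 ->
  (forall p q, P p -> R q -> ~ e p q) -> D `<=` P \/ D `<=` R.
Proof.
move=> Dc DPR PR0 noE.
case: (pselect (D `<=` P)) => [|nP]; first by left.
case: (pselect (D `<=` R)) => [|nR]; first by right.
exfalso; apply: Dc.
have [x Dx nPx] : exists2 x, D x & ~ P x.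
  apply: contrapT => H; apply: nP => x Dx; apply: contrapT => nx; apply: H; by exists x.
have [y Dy nRy] : exists2 y, D y & ~ R y.
  apply: contrapT => H; apply: nR => y Dy; apply: contrapT => ny; apply: H; by exists y.
exists (D `&` P), (D `&` R); split.
- exists y; split => //; by case: (DPR y Dy).
- exists x; split => //; by case: (DPR x Dx).
- apply/seteqP; split=> z; first by case=> -[].
  by move=> Dz; case: (DPR z Dz) => ?; [left|right].
- apply/seteqP; split=> z //; case=> -[_ Pz] [_ Rz].
  by have : (P `&` R) z by []; rewrite PR0.
- split.
  + by exists P.
  + by exists R.
  + by move=> p q [_ Pp] [_ Rq]; apply: noE.
Qed.

Lemma fin_union (T : finType) (e : T -> T -> Prop) (D C : set T) x :
  gconnected (@fin_closed T) e D -> gconnected (@fin_closed T) e C ->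
  D x -> C x -> gconnected (@fin_closed T) e (D `|` C).
Proof.
move=> Dc Cc Dx Cx [P [R [[p Pp] [r Rr] PRU PR0 [_ _ noE]]]].
have sD : D `<=` P `|` R by rewrite PRU => z Dz; left.
have sC : C `<=` P `|` R by rewrite PRU => z Cz; right.
have dis : forall z, P z -> R z -> False.
  by move=> z Pz Rz; have : (P `&` R) z by []; rewrite PR0.
have allin : forall S : set T, S `<=` D `|` C -> (D `|` C) `<=` S -> S !=set0 -> True by [].
case: (fin_side Dc sD PR0 noE) => hD; case: (fin_side Cc sC PR0 noE) => hC.
- have : (P `|` R) r by right.
  by rewrite PRU; case=> [/hD|/hC] Pr; apply: (dis r).
- by apply: (dis x); [apply: hD|apply: hC].
- by apply: (dis x); [apply: hC|apply: hD].
- have : (P `|` R) p by left.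
  by rewrite PRU; case=> [/hD|/hC] Rp; apply: (dis p).
Qed.

Lemma fin_single (T : finType) (e : T -> T -> Prop) (z : T) :
  gconnected (@fin_closed T) e [set z].
Proof.
move=> [P [R [[p Pp] [r Rr] PRU PR0 _]]].
have : (P `|` R) p by left.
rewrite PRU => /= pz.
have : (P `|` R) r by right.
rewrite PRU => /= rz.
have : (P `&` R) z by split; [rewrite -pz|rewrite -rz].
by rewrite PR0.
Qed.

Lemma fin_cl_rel (T : finType) (S P : set T) :
  P `<=` S -> exists P', @fin_closed T P' /\ P = S `&` P'.
Proof.
move=> sPS; exists P; split=> //; apply/seteqP; split=> x; last by case.
by move=> Px; split=> //; apply: sPS.
Qed.

Definition eprod (A : finType) (eA : rel A) (q : A) : rel (A * bool) :=
  fun u v => eA u.1 v.1 && [|| u.2 == v.2, u.1 == q | v.1 == q].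

Definition layer (A : finType) (Q : set A) (i : bool) : set (A * bool) :=
  [set u | Q u.1 /\ u.2 = i].

Lemma layer_conn (A : finType) (eA : rel A) q (Q : set A) i :
  gconnected (@fin_closed A) (fun a b => eA a b) Q ->
  gconnected (@fin_closed _) (fun a b => eprod eA q a b) (layer Q i).
Proof.
move=> Qc [P [R [[p Pp] [r Rr] PRU PR0 [_ _ noE]]]].
have hp : layer Q i p by rewrite -PRU; left.
have hr : layer Q i r by rewrite -PRU; right.
apply: Qc; exists [set x | P (x, i)], [set x | R (x, i)]; split.
- exists p.1; case: hp => _ <-; by case: p Pp.
- exists r.1; case: hr => _ <-; by case: r Rr.
- apply/seteqP; split=> x.
    move=> H; have : (P `|` R) (x, i) by case: H => H; [left|right].
    by rewrite PRU => -[].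
  move=> Qx; have : (P `|` R) (x, i) by rewrite PRU.
  by case=> H; [left|right].
- apply/seteqP; split=> x // [Px Rx].
  by have : (P `&` R) (x, i) by []; rewrite PR0.
- split.
  + apply: fin_cl_rel => x Px; have : (P `|` R) (x, i) by left.
    by rewrite PRU => -[].
  + apply: fin_cl_rel => x Px; have : (P `|` R) (x, i) by right.
    by rewrite PRU => -[].
  + move=> x y Px Ry exy; apply: (noE _ _ Px Ry).
    by rewrite /eprod /= exy eqxx.
Qed.

Lemma eprod_conn (A : finType) (eA : rel A) q :
  fin_connected_graph eA -> fin_connected_graph (eprod eA q).
Proof.
move=> [cA rA sA conA].
have esym : symmetric (eprod eA q).
  move=> u v; rewrite /eprod sA eq_sym; congr (_ && _).
  by case: (u.1 == q); case: (v.1 == q); rewrite ?orbT ?orbF.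
split => //.
- by rewrite card_prod muln_gt0 cA card_bool.
- by move=> u; rewrite /eprod rA eqxx.
- move=> [P [R [P0 R0 PRU PR0 [_ _ noE]]]].
  have sub : forall i, layer setT i `<=` P `|` R by move=> i z _; rewrite PRU.
  have L := fun i => fin_side (@layer_conn A eA q setT i conA) (sub i) PR0 noE.
  have dis : forall z, P z -> R z -> False.
    by move=> z Pz Rz; have : (P `&` R) z by []; rewrite PR0.
  have noE' : forall p r, P p -> R r -> ~ eprod eA q r p.
    by move=> p r Pp Rr h; apply: (noE p r Pp Rr); rewrite esym.
  have e01 : eprod eA q (q, false) (q, true) by rewrite /eprod rA eqxx orbT.
  have l0 : layer setT false (q, false) by [].
  have l1 : layer setT true (q, true) by [].
  have allP : forall i, layer setT i `<=` P -> layer setT (~~ i) `<=` P.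
    move=> i hi; case: (L (~~ i)) => // hR; exfalso.
    case: i hi hR => /= hi hR.
    + have := hi _ l1; have := hR _ l0 => Rq Pq.
      exact: (noE' _ _ Pq Rq e01).
    + have := hi _ l0; have := hR _ l1 => Rq Pq.
      exact: (noE _ _ Pq Rq e01).
  have allR : forall i, layer setT i `<=` R -> layer setT (~~ i) `<=` R.
    move=> i hi; case: (L (~~ i)) => // hP; exfalso.
    case: i hi hP => /= hi hP.
    + have := hi _ l1; have := hP _ l0 => Pq Rq.
      exact: (noE _ _ Pq Rq e01).
    + have := hi _ l0; have := hP _ l1 => Pq Rq.
      exact: (noE' _ _ Pq Rq e01).
  have lay : forall z : A * bool, layer setT z.2 z by [].
  case: (L false) => h.
  + case: R0 => r Rr; apply: (dis r) => //.
    by case: r Rr => x [] Rr; [apply: (allP false h)|apply: h].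
  + case: P0 => p Pp; apply: (dis p) => //.
    by case: p Pp => x [] Pp; [apply: (allR false h)|apply: h].
Qed.

Lemma fst_confluent (A : finType) (eA : rel A) q :
  fin_connected_graph eA -> fconfluent_epi (eprod eA q) eA fst.
Proof.
move=> [cA rA sA conA]; split.
  split.
  - by move=> x y /andP[].
  - by move=> w; exists (w, false).
  - move=> a b ab; exists (a, false), (b, false); split => //.
    by rewrite /eprod ab eqxx.
move=> Q Qc C [sC Cc Cmax].
apply/seteqP; split; first by move=> _ [z Cz <-]; apply: sC.
move=> y Qy.
have [w Cw] : C !=set0.
  apply: contrapT => nC.
  have h : [set (y, false)] = C.
    apply: Cmax.
    - by move=> z Cz; exfalso; apply: nC; exists z.
    - by move=> z /= ->.
    - exact: (@fin_single _ _ (y, false)).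
  by apply: nC; exists (y, false); rewrite -h.
have lc := @layer_conn A eA q Q w.2 Qc.
have lw : layer Q w.2 w by split => //; apply: sC.
have U := fin_union Cc lc Cw lw.
have E1 : C `|` layer Q w.2 = C.
  apply: Cmax; [by move=> z Cz; left | by move=> z [/sC|[]] | exact: U].
have : (C `|` layer Q w.2) (y, w.2) by right.
by rewrite E1 => Cy; exists (y, w.2).
Qed.

Local Open Scope ring_scope.

Lemma dball_open (R : realType) (V : topologicalType) (d : V -> V -> R) x r :
  compatible_metric d -> open [set y | d x y < r].
Proof.
move=> [dsep dsym dtri dopen]; apply/dopen => y /= dxy.
exists (r - d x y); first by rewrite subr_gt0.
move=> z dyz; have := dtri x y z; move: dyz dxy.
set a := d x y; set b := d y z; set c := d x z => h1 h2 h3.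
by apply: (le_lt_trans h3); rewrite -ltrBrDl.
Qed.

Lemma small_inv (R : realType) (s : R) : 0 < s ->
  exists N : nat, N.+1%:R^-1 < s.
Proof.
move=> s0; exists (Num.Def.trunc s^-1).
have h := truncnS_gt s^-1.
by rewrite -[X in _ < X]invrK ltf_pV2 ?posrE ?invr_gt0 //.
Qed.

Lemma not_all_set (T : Type) (S : set T) : S != setT -> exists x, ~ S x.
Proof.
move/eqP=> nS; apply: contrapT => H; apply: nS; apply/seteqP; split=> // x _.
by apply: contrapT => nx; apply: H; exists x.
Qed.

Lemma preimage_closed (V : topologicalType) (T : finType) (h : V -> T) (P : set T) :
  continuous_to_discrete h -> closed (h @^-1` P).
Proof.
move=> hc; have -> : h @^-1` P = ~` (h @^-1` (~` P)).
  by rewrite -preimage_setC setCK.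
exact: open_closedC.
Qed.

Lemma part2 (R : realType) (V : topologicalType) (E : set (V * V))
  (d : V -> V -> R) :
  compatible_metric d ->
  is_projective_Fraisse_limit E d ->
  ~ (exists (VA : set V) (EA : set (V * V)) (VB : set V) (EB : set (V * V)),
       [/\ closed_subgraph E VA EA, gconnected closed (tedge EA) VA,
           closed_subgraph E VB EB, gconnected closed (tedge EB) VB &
           [/\ VA `|` VB = setT, VA != setT & VB != setT]]).
Proof.
move=> dm [tg H1 H2 H3].
move: (dm) => [dsep dsym dtri dopen].
move=> [VA [EA [VB [EB [[cVA cEA sEA _ _] conA [cVB _ _ _ _] _ [VAB nA nB]]]]]].
have [a na] := not_all_set nB.
have [b nb] := not_all_set nA.
have [ra ra0 hra] := (dopen (~` VB)).1 (closed_openC cVB) a na.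
have [rb rb0 hrb] := (dopen (~` VA)).1 (closed_openC cVA) b nb.
have eps0 : 0 < Num.min ra rb by rewrite lt_min ra0 rb0.
have [A [eA [f [Ac [fc fepi fconf] fib]]]] := H3 _ eps0.
have Fa : forall z, f z = f a -> ~ VB z.
  move=> z fz; have [r rlt hr] := fib (f a).
  apply: hra; apply: (le_lt_trans (hr a z erefl fz)).
  by apply: (lt_le_trans rlt); rewrite ge_min lexx.
have Fb : forall z, f z = f b -> ~ VA z.
  move=> z fz; have [r rlt hr] := fib (f b).
  apply: hrb; apply: (le_lt_trans (hr b z erefl fz)).
  by apply: (lt_le_trans rlt); rewrite ge_min lexx orbT.
have inA : forall z, ~ VB z -> VA z.
  move=> z nz; have : (VA `|` VB) z by rewrite VAB.
  by case.
have [h [[hc hepi _] fgh]] := H2 A eA _ _ Ac (eprod_conn (f b) Ac) f fst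
   (And3 fc fepi fconf) (fst_confluent (f b) Ac).
have fh : forall z, (h z).1 = f z by move=> z; rewrite fgh.
case: hepi => hE hsurj _.
pose X := h @` VA.
have Xc : gconnected (@fin_closed _) (fun u v => eprod eA (f b) u v) X.
  move=> [P [Q [[p Pp] [q Qq] PQ PQ0 [_ _ noE]]]].
  have XP : P `<=` X by rewrite -PQ => z Pz; left.
  have XQ : Q `<=` X by rewrite -PQ => z Qz; right.
  apply: conA; exists (VA `&` h @^-1` P), (VA `&` h @^-1` Q); split.
  - by have [z VAz hz] := XP p Pp; exists z; split => //=; rewrite hz.
  - by have [z VAz hz] := XQ q Qq; exists z; split => //=; rewrite hz.
  - apply/seteqP; split=> z; first by case=> -[].
    move=> VAz; have : X (h z) by exists z.
    by rewrite -PQ; case=> ?; [left|right].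
  - apply/seteqP; split=> z // [[_ Pz] [_ Qz]].
    by have : (P `&` Q) (h z) by []; rewrite PQ0.
  - split.
    + by exists (h @^-1` P); split => //; exact: preimage_closed.
    + by exists (h @^-1` Q); split => //; exact: preimage_closed.
    + move=> x y [_ Px] [_ Qy] exy; apply: (noE _ _ Px Qy).
      by apply: hE; apply: sEA.
apply: Xc.
have inX : forall i, X (f a, i).
  move=> i; have [z hz] := hsurj (f a, i).
  have fz : f z = f a by rewrite -fh hz.
  by exists z => //; apply: inA; apply: Fa.
exists [set u | X u /\ u.2 = false], [set u | X u /\ u.2 = true]; split.
- by exists (f a, false).
- by exists (f a, true).
- apply/seteqP; split=> u; first by case=> -[].
  by move=> Xu; case E2: u.2; [right|left]; split.
- by apply/seteqP; split=> u // [[_ h1] [_]]; rewrite h1.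
- split.
  + by apply: fin_cl_rel => u [].
  + by apply: fin_cl_rel => u [].
  + move=> u v [[z VAz <-] hz2] [[w VAw <-] hw2].
    rewrite /eprod hz2 hw2 /= !fh => /andP[_].
    case/orP => /eqP; [move=> fzb|move=> fwb].
    * by apply: (Fb z fzb).
    * by apply: (Fb w fwb).
Qed.

Lemma part1 (R : realType) (V : topologicalType) (E : set (V * V))
  (d : V -> V -> R) :
  compatible_metric d ->
  is_projective_Fraisse_limit E d ->
  gconnected closed (tedge E) setT.
Proof.
move=> dm [[cV _ _ _ _] H1 H2 H3].
move: (dm) => [dsep dsym dtri dopen].
move=> [P [Q [P0 Q0 PQ PQ0 [[P' [cP' eP]] [Q' [cQ' eQ]] noE]]]].
rewrite setTI in eP; rewrite setTI in eQ; subst P' Q'.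
have dis : forall z, P z -> Q z -> False.
  by move=> z Pz Qz; have : (P `&` Q) z by []; rewrite PQ0.
have cP : compact P by apply: (subclosed_compact cP' cV).
pose Pn (n : nat) (x : V) := forall y, d x y < n.+1%:R^-1 -> ~ Q y.
have : \forall n \near \oo, P `<=` Pn n.
  apply: ((compact_near_coveringP P).1 cP nat \oo Pn _) => x Px.
  have [r r0 hr] := (dopen (~` Q)).1 (closed_openC cQ') x (dis x Px).
  have r20 : 0 < r / 2 by rewrite divr_gt0.
  have [N hN] := small_inv r20.
  rewrite /prop_near2 /=.
  exists ([set y | d x y < r / 2], [set n | (N <= n)%N]); first split => /=.
  - apply: open_nbhs_nbhs; split; first exact: dball_open.
    by rewrite /= (proj2 (dsep x x) erefl).
  - by exists N.
  - move=> [x' n] /= [dxx' Nn] y dy.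
    apply: hr; apply: (le_lt_trans (dtri x x' y)).
    rewrite [r](splitr r); apply: ltrD => //.
    apply: (lt_trans dy); apply: le_lt_trans hN.
    by rewrite lef_pV2 ?posrE // ler_nat.
move=> [N _ HN]; have HP := HN N (leqnn N).
have eps0 : 0 < N.+1%:R^-1 :> R by rewrite invr_gt0.
have [A [eA [f [[_ _ _ Ac] [fc [fE fsurj fElift] fconf] fib]]]] := H3 _ eps0.
have disA : forall a, (f @` P) a -> (f @` Q) a -> False.
  move=> a [x Px fx] [y Qy fy].
  have [r rlt hr] := fib a.
  apply: (HP x Px y) => //.
  exact: (le_lt_trans (hr x y fx fy)).
apply: Ac; exists (f @` P), (f @` Q); split.
- by case: P0 => x Px; exists (f x), x.
- by case: Q0 => x Qx; exists (f x), x.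
- apply/seteqP; split=> // a _; have [v <-] := fsurj a.
  have : (P `|` Q) v by rewrite PQ.
  by case=> ?; [left|right]; exists v.
- by apply/seteqP; split=> a // [] /disA.
- split.
  + by apply: fin_cl_rel.
  + by apply: fin_cl_rel.
  + move=> p q fPp fQq epq.
    have [x [y [exy fxp fyq]]] := fElift p q epq.
    have : (P `|` Q) x by rewrite PQ.
    have : (P `|` Q) y by rewrite PQ.
    case=> Qy; case=> Px.
    * by apply: (disA q) => //; exists y.
    * by apply: (disA q) => //; exists y.
    * exact: (noE x y Px Qy exy).
    * by apply: (disA p) => //; exists x.
Qed.

Theorem mainTheorem6 (R : realType) (V : topologicalType) (E : set (V * V))
  (d : V -> V -> R) :
  compatible_metric d ->
  is_projective_Fraisse_limit E d ->
  topological_graph E /\ indecomposable E.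
Proof.
move=> dm FL; split; first by case: FL.
split; [exact: part1 dm FL | exact: part2 dm FL].
Qed.
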